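(* Let $H=K_{K_{1,3},K_{1,4}}$ be the join of a star with $3$ leaves and a star with $4$ leaves. Then every proper edge-colouring of $H$ contains a rainbow copy of $K_4$.
   Context: For vertex-disjoint graphs $L,R$, the join $K_{L,R}$ has vertex set $V(L)\cup V(R)$ and edge set $E(L)\cup E(R)\cup\{uv: u\in V(L), v\in V(R)\}$. A subgraph is rainbow under an edge-colouring if all its edges receive distinct colours. *)

(* Defs.v *)
From mathcomp Require Import all_boot.
Set Implicit Arguments. Unset Strict Implicit. Unset Printing Implicit Defensive.

Definition star_adj (k : nat) : rel 'I_k.+1 :=
  fun i j => (i == ord0) != (j == ord0).

Definition join_adj (L R : finType) (eL : rel L) (eR : rel R) : rel (L + R) :=
  fun u v => match u, v with
             | inl x, inl y => eL x y
             | inr x, inr y => eR x y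
             | _, _ => true
             end.

Definition Hvert : finType := ('I_4 + 'I_5)%type.
Definition Hadj : rel Hvert := join_adj (@star_adj 3) (@star_adj 4).

(* An edge-colouring of a graph (V, e) with colours in C is a function on
   vertex pairs that is symmetric on edges (values off edges are irrelevant). *)
Definition edge_colouring (V : finType) (e : rel V) (C : Type) (c : V -> V -> C) :=
  forall x y, e x y -> c x y = c y x.

Definition proper_colouring (V : finType) (e : rel V) (C : Type) (c : V -> V -> C) :=
  edge_colouring e c /\
  forall x y z, e x y -> e x z -> y != z -> c x y <> c x z.

Definition has_rainbow_K4 (V : finType) (e : rel V) (C : Type) (c : V -> V -> C) :=
  exists f : 'I_4 -> V,
    injective f /\
    (forall i j, i != j -> e (f i) (f j)) /\
    (forall i j k l : 'I_4, i < j -> k < l -> (i, j) != (k, l) ->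
        c (f i) (f j) <> c (f k) (f l)).

(* Main.v *)
Require Import Defs.
From mathcomp Require Import all_boot.
From mathcomp Require Import zify.
From Stdlib Require Import Classical.

Definition va0 : Hvert := inl ord0.
Definition va1 : Hvert := inl (@Ordinal 4 1 isT).
Definition vb0 : Hvert := inr ord0.

Definition code (v : Hvert) : nat :=
  match v with inl x => val x | inr y => 4 + val y end.

Ltac side hj :=
  rewrite /Hadj /join_adj /star_adj /= ?hj //=.

Ltac S h := rewrite /va0 /va1 /vb0 /Hadj /join_adj /star_adj /= ?h //;
  try (apply/eqP => /(congr1 code); rewrite /code /=; lia).

Lemma rainbow_j (C : Type) (c : Hvert -> Hvert -> C)
  (Hs : forall x y, Hadj x y -> c x y = c y x)
  (Hp : forall x y z, Hadj x y -> Hadj x z -> y != z -> c x y <> c x z)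
  (j : 'I_5) (hj : j != ord0) :
  c va0 va1 <> c vb0 (inr j) -> c va0 vb0 <> c va1 (inr j) ->
  c va0 (inr j) <> c va1 vb0 -> has_rainbow_K4 Hadj c.
Proof.
move=> N1 N2 N3.
have hj' : (j == ord0) = false by apply/negbTE.
have hjv : nat_of_ord j <> 0 by move=> E; move/eqP: hj; apply; apply: val_inj.
have P2 : forall x y z, Hadj x y -> Hadj x z -> y != z -> c y x <> c x z.
  by move=> x y z a b d; rewrite -Hs //; apply: Hp.
have P3 : forall x y z, Hadj x y -> Hadj x z -> y != z -> c x y <> c z x.
  by move=> x y z a b d; rewrite -(Hs x z) //; apply: Hp.
have P4 : forall x y z, Hadj x y -> Hadj x z -> y != z -> c y x <> c z x.
  by move=> x y z a b d; rewrite -(Hs x z) // -Hs //; apply: Hp.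
pose f := fun i : 'I_4 => match val i with 0 => va0 | 1 => va1 | 2 => vb0 | _ => inr j end.
exists f; split; [|split].
- move=> [[|[|[|[|i]]]] Hi] [[|[|[|[|k]]]] Hk] //=;
    rewrite /f /= => E; move/(congr1 code): E; rewrite /code /=;
    try (move=> _; apply: val_inj; reflexivity); lia.
- move=> [[|[|[|[|i]]]] Hi] [[|[|[|[|k]]]] Hk] //= _; rewrite /f /va0 /va1 /vb0;
    side hj'.
- move=> [[|[|[|[|i]]]] Hi] [[|[|[|[|k]]]] Hk] [[|[|[|[|l1]]]] Hl1] [[|[|[|[|l]]]] Hl] //= _ _ _;
  rewrite /f /=.
  all: first [ exact N1 | exact N2 | exact N3 | exact (nesym N1) | exact (nesym N2) | exact (nesym N3)
              | (apply: Hp; S hj') | (apply: P2; S hj') | (apply: P3; S hj') | (apply: P4; S hj') ].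
Qed.

Theorem mainTheorem6 (C : Type) (c : Hvert -> Hvert -> C) :
  proper_colouring Hadj c -> has_rainbow_K4 Hadj c.
Proof.
move=> [Hs Hp].
have key : forall j : 'I_5, j != ord0 ->
  (c va0 va1 = c vb0 (inr j) \/ c va0 vb0 = c va1 (inr j) \/ c va0 (inr j) = c va1 vb0)
  \/ has_rainbow_K4 Hadj c.
  move=> j hj.
  destruct (classic (c va0 va1 = c vb0 (inr j))) as [e|n1]; first by left; left.
  destruct (classic (c va0 vb0 = c va1 (inr j))) as [e|n2]; first by left; right; left.
  destruct (classic (c va0 (inr j) = c va1 vb0)) as [e|n3]; first by left; right; right.
  by right; exact: (@rainbow_j C c Hs Hp j hj n1 n2 n3).
have [[K1|[K1|K1]]|//] := key (@Ordinal 5 1 isT) isT;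
have [[K2|[K2|K2]]|//] := key (@Ordinal 5 2 isT) isT;
have [[K3|[K3|K3]]|//] := key (@Ordinal 5 3 isT) isT;
have [[K4|[K4|K4]]|//] := key (@Ordinal 5 4 isT) isT;
exfalso;
match goal with
| H1 : ?X = ?Y1, H2 : ?X = ?Y2 |- _ =>
    tryif constr_eq Y1 Y2 then fail else
    (refine (Hp _ _ _ _ _ _ (etrans (esym H1) H2)); by [])
| H1 : ?Y1 = ?X, H2 : ?Y2 = ?X |- _ =>
    tryif constr_eq Y1 Y2 then fail else
    (refine (Hp _ _ _ _ _ _ (etrans H1 (esym H2))); by [])
end.
Qed.
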